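(* Let $\mathbf S_1,\mathbf S_2\in\mathrm{Sym}(m;2)$ and $\mathbf G_j=\mathbf G_U(\mathbf S_j)\mathbf H_N$ for $j=1,2$, and put $\mathbf G=\mathbf G_1^\dagger\mathbf G_2$ and $r=\mathrm{rank}(\mathbf S_1+\mathbf S_2)$. Then every column of $\mathbf G$ has exactly $2^r$ nonzero entries, each of modulus $2^{-r/2}$, and for each column the set of row indices $\mathbf b_1\in\mathbb F_2^m$ of its nonzero entries is a coset of the subspace $H=\mathrm{rs}(\mathbf S_1+\mathbf S_2)$ (row space over $\mathbb F_2$) in $\mathbb F_2^m$.
   Context: Fix $m\ge1$, $N=2^m$. $\mathrm{Sym}(m;2)$ is the set of symmetric binary $m\times m$ matrices; addition and rank are over $\mathbb F_2$. The standard basis of $\mathbb C^N=(\mathbb C^2)^{\otimes m}$ is $\{\mathbf e_{\mathbf v}=\mathbf e_{v_1}\otimes\cdots\otimes\mathbf e_{v_m}:\mathbf v\in\mathbb F_2^m\}$ and matrices on $\mathbb C^N$ are indexed by $\mathbb F_2^m\times\mathbb F_2^m$; $\dagger$ is conjugate transpose. $\mathbf G_U(\mathbf S)=\mathrm{diag}(i^{\mathbf v^T\mathbf S\mathbf v})_{\mathbf v\in\mathbb F_2^m}$, where $\mathbf v^T\mathbf S\mathbf v$ is computed in $\mathbb Z$ after lifting binary entries to $0,1$. $\mathbf H_N=\mathbf H_2^{\otimes m}=2^{-m/2}[(-1)^{\mathbf v^T\mathbf w}]_{\mathbf v,\mathbf w\in\mathbb F_2^m}$ with $\mathbf H_2=\frac1{\sqrt2}\begin{pmatrix}1&1\\1&-1\end{pmatrix}$.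 (The columns of $\mathbf G_U(\mathbf S)\mathbf H_N$ are the binary chirps with symmetric matrix $\mathbf S$.) *)

(* Defs.v *)
From HB Require Import structures.
From mathcomp Require Import all_boot all_order all_algebra algC.
Set Implicit Arguments. Unset Strict Implicit. Unset Printing Implicit Defensive.
Import Order.TTheory GRing.Theory Num.Theory.
Local Open Scope ring_scope.

(* Complex numbers: mathcomp's algebraic complex numbers algC (all entries
   considered are algebraic). Vectors of F_2^m are row vectors 'rV['F_2]_m. *)
Notation F2vec m := 'rV['F_2]_m.

(* Matrices on C^N, N = 2^m, indexed by F_2^m x F_2^m. *)
Definition cmat (m : nat) := F2vec m -> F2vec m -> algC.

Definition lift01 (x : 'F_2) : nat := nat_of_ord x.

(* v^T S v computed in Z (here in nat, all terms nonnegative) *)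
Definition qform (m : nat) (S : 'M['F_2]_m) (v : F2vec m) : nat :=
  (\sum_(i < m) \sum_(j < m) lift01 (v ord0 i) * lift01 (S i j) * lift01 (v ord0 j))%N.

Definition symF2 (m : nat) (S : 'M['F_2]_m) : bool := S^T == S.

Definition GU (m : nat) (S : 'M['F_2]_m) : cmat m :=
  fun v w => if v == w then 'i ^+ qform S v else 0.

Definition HN (m : nat) : cmat m :=
  fun v w => (sqrtC 2)^-1 ^+ m * (-1) ^+ lift01 ((v *m w^T) ord0 ord0).

Definition cmul (m : nat) (A B : cmat m) : cmat m :=
  fun v w => \sum_(u : F2vec m) A v u * B u w.

Definition cadj (m : nat) (A : cmat m) : cmat m := fun v w => (A w v)^*.
Arguments HN m : clear implicits.

(* Main.v *)
Require Import Defs.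
From HB Require Import structures.
From mathcomp Require Import all_boot all_order all_algebra algC.
From mathcomp Require Import zify ring mxabelem.
Set Implicit Arguments. Unset Strict Implicit. Unset Printing Implicit Defensive.
Import Order.TTheory GRing.Theory Num.Theory.
Local Open Scope ring_scope.


Lemma F2_cases (x : 'F_2) : x = 0 \/ x = 1.
Proof.
case: x => [[|[|k]] Hk]; [left|right|by []]; exact: val_inj.
Qed.

Definition sgn (x : 'F_2) : algC := (-1) ^+ lift01 x.

Lemma l01_0 : lift01 0 = 0%N. Proof. by []. Qed.
Lemma l01_1 : lift01 1 = 1%N. Proof. by []. Qed.
Lemma l01_11 : lift01 (1 + 1) = 0%N. Proof. by []. Qed.

Lemma sgnD x y : sgn (x + y) = sgn x * sgn y.
Proof.
rewrite /sgn.
case: (F2_cases x) => ->; case: (F2_cases y) => ->; rewrite ?addr0 ?add0r ?l01_0 ?l01_1 ?l01_11 /=; 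
  rewrite ?expr0 ?expr1 ?mulr1 ?mul1r ?mulrNN ?mulr1 //.
Qed.

Lemma liftD_int (x y : 'F_2) : (lift01 (x + y))%:Z = (lift01 x)%:Z + (lift01 y)%:Z - 2 * (lift01 x)%:Z * (lift01 y)%:Z.
Proof.
case: (F2_cases x) => ->; case: (F2_cases y) => ->; rewrite ?addr0 ?add0r ?l01_0 ?l01_1 ?l01_11 //.
Qed.

Lemma liftM (x y : 'F_2) : lift01 (x * y) = (lift01 x * lift01 y)%N.
Proof.
case: (F2_cases x) => ->; case: (F2_cases y) => ->; rewrite ?mulr0 ?mul0r ?mulr1 //.
Qed.

Lemma lift_nat (n : nat) : lift01 (n%:R : 'F_2) = (n %% 2)%N.
Proof. exact: val_Fp_nat. Qed.

Lemma lift_K (x : 'F_2) : (lift01 x)%:R = x.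
Proof. by case: (F2_cases x) => ->. Qed.


Definition dot m (u v : F2vec m) : 'F_2 := (u *m v^T) ord0 ord0.

Lemma dotDl m (u v w : F2vec m) : dot (u + v) w = dot u w + dot v w.
Proof. by rewrite /dot mulmxDl mxE. Qed.
Lemma dotDr m (u v w : F2vec m) : dot w (u + v) = dot w u + dot w v.
Proof. by rewrite /dot linearD /= mulmxDr mxE. Qed.
Lemma dotC m (u v : F2vec m) : dot u v = dot v u.
Proof. by rewrite /dot !mxE; apply: eq_bigr => i _; rewrite !mxE mulrC. Qed.
Lemma dot0r m (u : F2vec m) : dot u 0 = 0.
Proof. by rewrite /dot linear0 mulmx0 mxE. Qed.

Lemma card_F2vec m : #|F2vec m| = (2 ^ m)%N.
Proof. by rewrite card_mx card_Fp // mul1n. Qed.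

Lemma sgn0 : sgn 0 = 1. Proof. by rewrite /sgn l01_0. Qed.
Lemma sgn1 : sgn 1 = -1. Proof. by rewrite /sgn l01_1 expr1. Qed.
Lemma sgn_sq x : sgn x * sgn x = 1.
Proof. by rewrite -sgnD; case: (F2_cases x) => ->; rewrite ?addr0 -?sgn0 //; rewrite -[1 + 1]/(0 : 'F_2). Qed.
Lemma sgn_conj x : (sgn x)^* = sgn x.
Proof. by rewrite /sgn rmorphXn /= rmorphN1. Qed.

Lemma char_sum m (a : F2vec m) :
  \sum_(v : F2vec m) sgn (dot v a) = if a == 0 then (2 ^ m)%:R else 0.
Proof.
case: eqP => [->|/eqP ha].
  under eq_bigr do rewrite dot0r sgn0.
  by rewrite sumr_const card_F2vec.
have [j Hj] : exists j, a ord0 j != 0.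
  case: (pickP (fun j => a ord0 j != 0)) => [j Hj|H]; first by exists j.
  by case/eqP: ha; apply/matrixP => i k; rewrite (ord1 i) mxE; apply/eqP; move: (H k) => /= /negbFE.
have Ha1 : a ord0 j = 1 by case: (F2_cases (a ord0 j)) Hj => ->.
set e : F2vec m := delta_mx ord0 j.
have He : dot e a = 1.
  by rewrite /dot /e -rowE mxE mxE.
set Σ := \sum_(v : F2vec m) _.
have : Σ = - Σ.
  rewrite {1}/Σ (reindex_inj (addIr e)) /=.
  under eq_bigr do rewrite dotDl sgnD He sgn1 mulrN1.
  by rewrite sumrN.
move/eqP; rewrite -subr_eq0 opprK -mulr2n mulrn_eq0 /= => /eqP //.
Qed.


Section Quad.
Variable m : nat.
Variable S : 'M['F_2]_m.
Hypothesis symS : symF2 S.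

Let s i j : int := (lift01 (S i j))%:Z.
Let T (g h : 'I_m -> int) := \sum_i \sum_j g i * s i j * h j.

Lemma s_sym i j : s i j = s j i.
Proof. by rewrite /s; move/eqP: symS => {1}<-; rewrite mxE. Qed.

Lemma T_sym g h : T g h = T h g.
Proof.
rewrite /T exchange_big; apply: eq_bigr => i _; apply: eq_bigr => j _.
by rewrite s_sym; ring.
Qed.

Lemma dsplit (F G : 'I_m -> 'I_m -> int) :
  \sum_i \sum_j (F i j + G i j) = \sum_i \sum_j F i j + \sum_i \sum_j G i j.
Proof. by rewrite -big_split; apply: eq_bigr => i _; rewrite big_split. Qed.

Lemma dscale c (F : 'I_m -> 'I_m -> int) :
  \sum_i \sum_j (c * F i j) = c * \sum_i \sum_j F i j.
Proof. by rewrite mulr_sumr; apply: eq_bigr => i _; rewrite mulr_sumr. Qed.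

Lemma dantisym (g h : 'I_m -> int) :
  \sum_i \sum_j (h i * s i j * g j - g i * s i j * h j) = 0.
Proof.
have := T_sym g h; rewrite /T => E.
under eq_bigr do rewrite sumrB.
by rewrite sumrB E subrr.
Qed.

Lemma qz (x : F2vec m) : (qform S x)%:Z = T (fun i => (lift01 (x ord0 i))%:Z) (fun i => (lift01 (x ord0 i))%:Z).
Proof.
rewrite /qform /T (big_morph Posz PoszD (erefl _)); apply: eq_bigr => i _.
rewrite (big_morph Posz PoszD (erefl _)); apply: eq_bigr => j _.
by rewrite !PoszM.
Qed.

Lemma qform_add_int (u v : F2vec m) :
  exists K : int,
  (qform S (u + v))%:Z = (qform S u)%:Z + (qform S v)%:Z
     + 2 * T (fun i => (lift01 (u ord0 i))%:Z) (fun i => (lift01 (v ord0 i))%:Z) + 4 * K.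
Proof.
set a := fun i => (lift01 (u ord0 i))%:Z.
set b := fun i => (lift01 (v ord0 i))%:Z.
set p := fun i => a i * b i.
exists (T p p - T p (fun i => a i + b i)).
rewrite !qz /T.
have -> : \sum_i \sum_j (lift01 ((u + v) ord0 i))%:Z * s i j * (lift01 ((u + v) ord0 j))%:Z
  = \sum_i \sum_j (a i * s i j * a j + b i * s i j * b j + 2 * (a i * s i j * b j)
      + 4 * (p i * s i j * p j) + (-4) * (p i * s i j * (a j + b j))
      + (b i * s i j * a j - a i * s i j * b j)
      + 2 * (p i * s i j * (a j + b j) - (a i + b i) * s i j * p j))...
  apply: eq_bigr => i _; apply: eq_bigr => j _.
  rewrite !mxE !liftD_int /p /a /b. ring.
rewrite dsplit dscale dantisym dsplit dantisym !dsplit !dscale /a /b /p; ring.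

Qed.
End Quad.

Lemma i4 : ('i : algC) ^+ 4 = 1.
Proof. by rewrite -[4%N]/(2 * 2)%N exprM sqrCi expr2 mulrNN mulr1. Qed.

Lemma iexp4 (n k : nat) : ('i : algC) ^+ (n + 4 * k) = 'i ^+ n.
Proof. by rewrite exprD exprM i4 expr1n mulr1. Qed.

Lemma iexp2 (l : nat) : ('i : algC) ^+ (2 * l) = (-1) ^+ l.
Proof. by rewrite exprM sqrCi. Qed.

Section Quad2.
Variable m : nat.
Variable S : 'M['F_2]_m.
Hypothesis symS : symF2 S.

Lemma bil_par (u v : F2vec m) : exists J : int,
  \sum_i \sum_j (lift01 (u ord0 i))%:Z * (lift01 (S i j))%:Z * (lift01 (v ord0 j))%:Z
  = (lift01 ((u *m S *m v^T) ord0 ord0))%:Z + 2 * J.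
Proof.
set N := (\sum_i \sum_j lift01 (u ord0 i) * lift01 (S i j) * lift01 (v ord0 j))%N.
have HN : (u *m S *m v^T) ord0 ord0 = N%:R.
  rewrite /N mxE natr_sum; under [RHS]eq_bigr do rewrite natr_sum.
  rewrite [RHS]exchange_big; apply: eq_bigr => j _.
  rewrite !mxE mulr_suml; apply: eq_bigr => i _.
  by rewrite !natrM !lift_K.
exists (N %/ 2)%N.
rewrite HN lift_nat.
have -> : \sum_i \sum_j (lift01 (u ord0 i))%:Z * (lift01 (S i j))%:Z * (lift01 (v ord0 j))%:Z = N%:Z.
  rewrite /N (big_morph Posz PoszD (erefl _)); apply: eq_bigr => i _.
  rewrite (big_morph Posz PoszD (erefl _)); apply: eq_bigr => j _.
  by rewrite !PoszM.
rewrite {1}(divn_eq N 2); lia.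
Qed.

Lemma iq (u v : F2vec m) :
  ('i : algC) ^+ qform S (u + v) = 'i ^+ qform S u * 'i ^+ qform S v * sgn ((u *m S *m v^T) ord0 ord0).
Proof.
have [K HK] := qform_add_int symS u v.
have [J HJ] := bil_par u v.
rewrite HJ in HK.
rewrite /sgn -iexp2 -!exprD.
set l := lift01 _ in HK *.
have HK' : (qform S (u + v))%:Z = (qform S u + qform S v + 2 * l)%N%:Z + 4 * (J + K).
  rewrite HK; lia.
move: HK'; case: (J + K) => k HK'.
- have E : (qform S (u + v) = qform S u + qform S v + 2 * l + 4 * k)%N by lia.
  by rewrite E iexp4.
- have E : (qform S (u + v) + 4 * k.+1 = qform S u + qform S v + 2 * l)%N.
    rewrite NegzE in HK'; lia.
  by rewrite -E iexp4.
Qed.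
End Quad2.


Section Main.
Variable m : nat.
Variables S1 S2 : 'M['F_2]_m.
Hypothesis sym1 : symF2 S1.
Hypothesis sym2 : symF2 S2.

Let S := S1 + S2.

Lemma symS : S^T = S.
Proof. by rewrite /S raddfD /= (eqP sym1) (eqP sym2). Qed.

Definition f (u : F2vec m) : algC := ('i ^+ qform S1 u)^* * 'i ^+ qform S2 u.

Lemma fD u v : f (u + v) = f u * f v * sgn ((u *m S *m v^T) ord0 ord0).
Proof.
rewrite /f !iq // !rmorphM /= sgn_conj.
have -> : (u *m S *m v^T) ord0 ord0 = (u *m S1 *m v^T) ord0 ord0 + (u *m S2 *m v^T) ord0 ord0.
  by rewrite /S mulmxDr mulmxDl mxE.
rewrite sgnD; ring.
Qed.

Lemma i_unit (n : nat) : ('i : algC) ^+ n * ('i ^+ n)^* = 1.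
Proof.
rewrite rmorphXn /= -exprMn conjCi mulrN -expr2 sqrCi opprK expr1n //.
Qed.

Lemma f_unit u : f u * (f u)^* = 1.
Proof.
rewrite /f rmorphM /= conjCK.
have h1 := i_unit (qform S1 u); have h2 := i_unit (qform S2 u).
transitivity ((('i : algC) ^+ qform S1 u * ('i ^+ qform S1 u)^*) * ('i ^+ qform S2 u * ('i ^+ qform S2 u)^*)); first ring.
by rewrite h1 h2 mulr1.
Qed.

Lemma qform0 (T : 'M['F_2]_m) : qform T 0 = 0%N.
Proof.
rewrite /qform big1 // => i _; rewrite big1 // => j _.
by rewrite mxE.
Qed.

Lemma f0 : f 0 = 1.
Proof. by rewrite /f !qform0 expr0 rmorph1 mulr1. Qed.

Definition F (c : F2vec m) : algC := \sum_(u : F2vec m) sgn (dot u c) * f u.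

Lemma Bker (t v : F2vec m) : t *m S == 0 -> (v *m S *m t^T) ord0 ord0 = 0.
Proof.
move/eqP => Ht.
have H : S *m t^T = 0 by rewrite -{1}symS -trmx_mul Ht trmx0.
by rewrite -mulmxA H mulmx0 mxE.
Qed.

Lemma FF c : F c * (F c)^* = (2 ^ m)%:R * \sum_(t | t *m S == 0) sgn (dot t c) * f t.
Proof.
rewrite /F rmorph_sum /= mulr_suml.
under [LHS]eq_bigr do rewrite mulr_sumr.
rewrite exchange_big /=.
transitivity (\sum_(v : F2vec m) \sum_(t : F2vec m) sgn (dot t c) * f t * sgn (dot v (t *m S))).
  apply: eq_bigr => v _; rewrite (reindex_inj (addIr v)) /=; apply: eq_bigr => t _.
  rewrite fD dotDl sgnD rmorphM /= sgn_conj.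
  have -> : (t *m S *m v^T) ord0 ord0 = dot v (t *m S) by rewrite dotC.
  have h1 := sgn_sq (dot v c); have h2 := f_unit v.
  transitivity (sgn (dot t c) * f t * sgn (dot v (t *m S)) * (sgn (dot v c) * sgn (dot v c)) * (f v * (f v)^*)); first ring.
  by rewrite h1 h2 !mulr1.
rewrite exchange_big /=.
under eq_bigr do rewrite -mulr_sumr char_sum.
rewrite mulr_sumr [RHS]big_mkcond; apply: eq_bigr => t _.
by case: ifP => _; rewrite ?mulr0 // mulrC.
Qed.

Definition Pk (c : F2vec m) : bool :=
  [forall t : F2vec m, (t *m S == 0) ==> (sgn (dot t c) * f t == 1)].

Lemma ksum c : \sum_(t | t *m S == 0) sgn (dot t c) * f t
  = if Pk c then (#|[set t : F2vec m | t *m S == 0]|)%:R else 0.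
Proof.
set g := fun t => sgn (dot t c) * f t.
have gD : forall t t0, t0 *m S == 0 -> g (t + t0) = g t * g t0.
  move=> t t0 H; rewrite /g dotDl sgnD fD Bker // sgn0 mulr1; ring.
rewrite /Pk; case: (boolP [forall _, _]) => [/forallP H|].
  rewrite (eq_bigr (fun _ => 1)) => [|t Ht]; last by move: (H t); rewrite Ht => /eqP.
  rewrite -sum1_card natr_sum; apply: eq_bigl => t; by rewrite inE.
rewrite negb_forall => /existsP [t0]; rewrite negb_imply => /andP [Ht0 Hg].
set Σ := \sum_(t | _) _.
have : Σ = Σ * g t0.
  rewrite {1}/Σ (reindex_inj (addIr t0)) /= mulr_suml.
  apply: eq_big => [t|t _]; first by rewrite mulmxDl (eqP Ht0) addr0.
  by have := gD t t0 Ht0; rewrite /g => ->.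
move/eqP; rewrite -subr_eq0 -{1}[Σ]mulr1 -mulrBr mulf_eq0 subr_eq0.
case/orP => [/eqP -> //|/eqP H1].
by move: Hg; rewrite -/(g t0) -H1 eqxx.
Qed.

Lemma kcard : #|[set t : F2vec m | t *m S == 0]| = (2 ^ (m - \rank S))%N.
Proof.
have -> : [set t : F2vec m | t *m S == 0] = rowg (kermx S).
  apply/setP => t; rewrite inE mem_rowg.
  by apply/idP/idP => [/eqP/sub_kermxP|/sub_kermxP/eqP].
by rewrite card_rowg mxrank_ker card_Fp.
Qed.

End Main.


Lemma cmulGU m (T : 'M['F_2]_m) u b :
  cmul (GU T) (HN m) u b = 'i ^+ qform T u * ((sqrtC 2)^-1 ^+ m * sgn (dot u b)).
Proof.
rewrite /cmul (bigD1 u) //= big1 => [|v /negbTE Hv]; last by rewrite /GU eq_sym Hv mul0r.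
by rewrite /GU eqxx addr0.
Qed.

Lemma k_ge0 m : 0 <= ((sqrtC 2)^-1 ^+ m : algC).
Proof. by rewrite exprn_ge0 // invr_ge0 sqrtC_ge0 ler0n. Qed.

Lemma kk m : ((sqrtC 2)^-1 ^+ m : algC) * (sqrtC 2)^-1 ^+ m = ((2:algC) ^+ m)^-1.
Proof. by rewrite -exprMn -expr2 exprVn sqrtCK exprVn. Qed.

Lemma GE m (S1 S2 : 'M['F_2]_m) b w :
  cmul (cadj (cmul (GU S1) (HN m))) (cmul (GU S2) (HN m)) b w
  = ((2:algC) ^+ m)^-1 * F S1 S2 (b + w).
Proof.
rewrite {1}/cmul /cadj /F mulr_sumr; apply: eq_bigr => u _.
rewrite !cmulGU !rmorphM /= (geC0_conj (k_ge0 m)) sgn_conj dotDr sgnD -kk /f; ring.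
Qed.

Theorem corollary4 (m : nat) (S1 S2 : 'M['F_2]_m) :
  (0 < m)%N -> symF2 S1 -> symF2 S2 ->
  let G := cmul (cadj (cmul (GU S1) (HN m))) (cmul (GU S2) (HN m)) in
  let r := \rank (S1 + S2)%R in
  forall w : F2vec m,
    #|[set b : F2vec m | G b w != 0]| = (2 ^ r)%N /\
    (forall b : F2vec m, G b w != 0 -> `|G b w| = ((sqrtC 2) ^+ r)^-1) /\
    (exists a : F2vec m, forall b : F2vec m,
        (G b w != 0) = (b - a <= (S1 + S2)%R)%MS).
Proof.
intros _ h1 h2 G r w.
have c2 : (((2:algC) ^+ m)^-1)^* = ((2:algC) ^+ m)^-1.
  by apply: geC0_conj; rewrite invr_ge0 exprn_ge0 // ler0n.
have two_nz : forall n, ((2:algC) ^+ n) != 0 by move=> n; apply: expf_neq0; rewrite pnatr_eq0.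
have hr : (r <= m)%N by apply: rank_leq_row.
have norm : forall b, G b w * (G b w)^* = if Pk S1 S2 (b + w) then ((2:algC) ^+ r)^-1 else 0.
  move=> b; rewrite /G GE rmorphM /= c2.
  transitivity (((2:algC) ^+ m)^-1 * ((2:algC) ^+ m)^-1 * (F S1 S2 (b + w) * (F S1 S2 (b + w))^*)); first ring.
  rewrite FF // ksum // kcard //.
  case: ifP => _; last by rewrite !mulr0.
  rewrite !natrX -/r.
  have E : (2:algC) ^+ m = 2 ^+ (m - r) * 2 ^+ r by rewrite -exprD subnK.
  rewrite E; field; by rewrite ?mulf_neq0 ?two_nz.
have nz : forall b, (G b w != 0) = Pk S1 S2 (b + w).
  move=> b; rewrite -mul_conjC_eq0 norm; case: (Pk _ _ _); rewrite ?eqxx //=.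
  by rewrite invr_eq0 two_nz.
have absG : forall b, G b w != 0 -> `|G b w| = ((sqrtC 2) ^+ r)^-1.
  move=> b Hb.
  have e : `|G b w| ^+ 2 = (((sqrtC 2) ^+ r)^-1) ^+ 2.
    rewrite normCK norm -nz Hb exprVn -exprM mulnC exprM sqrtCK //.
  rewrite -[LHS]sqrCK ?normr_ge0 // e sqrCK //.
  by rewrite invr_ge0 exprn_ge0 // sqrtC_ge0 ler0n.
set C := [set b : F2vec m | G b w != 0].
have pars : \sum_(b : F2vec m) G b w * (G b w)^* = 1.
  transitivity (((2:algC) ^+ m)^-1 * ((2:algC) ^+ m)^-1 *
     \sum_(c : F2vec m) F S1 S2 c * (F S1 S2 c)^*).
    rewrite [in RHS](reindex_inj (addIr w)) /= big_distrr; apply: eq_bigr => b _ /=.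
    rewrite /G GE rmorphM /= c2; ring.
  under eq_bigr do rewrite FF //.
  rewrite -mulr_sumr exchange_big /=.
  under eq_bigr => t _ do (under eq_bigr => c _ do rewrite dotC; rewrite -mulr_suml char_sum).
  rewrite (bigD1 0) /=; last by rewrite mul0mx.
  rewrite big1 => [|t /andP [_ /negbTE ->]]; last by rewrite mul0r.
  rewrite eqxx f0 addr0 mulr1 natrX; field; by rewrite two_nz.
have Hcard : #|C| = (2 ^ r)%N.
  move: pars; under eq_bigr do rewrite norm.
  rewrite -big_mkcond /=.
  rewrite (eq_bigl (fun b => b \in C)) => [|b]; last by rewrite inE nz.
  rewrite sumr_const => H.
  apply/eqP; rewrite -(eqr_nat algC) natrX.
  have : (#|C|%:R : algC) * ((2:algC) ^+ r)^-1 = 1 by rewrite mulr_natl H.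
  move/(congr1 (fun y => y * 2 ^+ r)); rewrite -mulrA mulVf ?two_nz // mulr1 mul1r => ->.
  by [].
split=> //; split=> //.
have [b0 Hb0] : exists b0, b0 \in C.
  by apply/set0Pn; rewrite -card_gt0 Hcard expn_gt0.
exists b0.
set D := [set b : F2vec m | (b - b0 <= (S1 + S2)%R)%MS].
have DC : D \subset C.
  apply/subsetP => b; rewrite !inE nz => Hy.
  move: Hb0; rewrite inE nz => /forallP Pb0.
  apply/forallP => t; apply/implyP => Ht.
  move: (Pb0 t); rewrite Ht /=.
  have E : dot t (b + w) = dot t (b0 + w) + dot t (b - b0).
    by rewrite -dotDr; congr dot; rewrite [RHS]addrC addrA subrK.
  case/submxP: Hy => z Hz.
  have E2 : dot t (b - b0) = 0 by rewrite Hz dotC /dot Bker.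
  by rewrite E E2 addr0.
have cardD : #|D| = (2 ^ r)%N.
  have -> : D = (fun b => b - b0) @^-1: rowg (S1 + S2)%R.
    by apply/setP => b; rewrite !inE ?mem_rowg.
  by rewrite card_preimset ?card_rowg ?card_Fp //; apply: addIr.
have DeqC : D = C.
  by apply/eqP; rewrite eqEcard DC Hcard cardD leqnn.
move=> b.
have -> : (G b w != 0) = (b \in C) by rewrite inE.
by rewrite -DeqC inE.
Qed.
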